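(* Let $n\ge3$, $1\le j\le n-2$ and $K\in\mathcal K^n$. For $z\in\{\pm e_n\}$, one has $z\in\operatorname{ext}(K[j],B_L^{n-1}[n-1-j])$ if and only if $\dim TS(K,z)\ge j$. For $z\in\mathbb S^{n-1}\setminus\{\pm e_n\}$, one has $z\in\operatorname{ext}(K[j],B_L^{n-1}[n-1-j])$ if and only if $\dim TS(K,z)\ge j$ and $TS(K,z)\not\subseteq L$.
   Context: $\mathcal K^n$ is the set of convex bodies in $\mathbb R^n$; $L=e_n^\perp$, $B_L^{n-1}=B^n\cap L$; $K[m]$ means $K$ repeated $m$ times. For $K\in\mathcal K^n$, $z\ne o$: $F(K,z)=\{x\in K:\langle x,z\rangle=h_K(z)\}$; $N(K,x)=\{u:\langle x,u\rangle=h_K(u)\}$ is the normal cone at $x\in\partial K$, and $N(K,F)=N(K,x)$ for $x$ in the relative interior of a nonempty convex $F\subseteq K$. The touching cone $T(K,z)$ is the unique face of $N(K,F(K,z))$ containing $z$ in its relative interior, and the touching space is $TS(K,z)=T(K,z)^\perp$ (orthogonal complement of its linear span). For $K_1,\dots,K_{n-1}\in\mathcal K^n$, $z\in\mathbb S^{n-1}$ is $(K_1,\dots,K_{n-1})$-extreme if there are linear hyperplanes $E_i\supseteq T(K_i,z)$ with $\dim(E_1\cap\dots\cap E_{n-1})=1$; $\operatorname{ext}(K_1,\dots,K_{n-1})$ is the set of such $z$. *)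

(* Defs.v *)
From HB Require Import structures.
From mathcomp Require Import all_boot all_order all_algebra.
From mathcomp Require Import all_classical all_reals all_analysis.
Set Implicit Arguments. Unset Strict Implicit. Unset Printing Implicit Defensive.
Import Order.TTheory GRing.Theory Num.Theory.
Import numFieldNormedType.Exports.
Local Open Scope classical_set_scope.
Local Open Scope ring_scope.

Section Convex.
Variables (R : realType) (n : nat).
Notation V := 'rV[R]_n.

Definition dot (x y : V) : R := \sum_(i < n) x 0 i * y 0 i.

Definition sphere : set V := [set x | dot x x = 1].

Definition convex_set (C : set V) : Prop :=
  forall x y t, C x -> C y -> 0 <= t <= 1 -> C ((1 - t) *: x + t *: y).

Definition convex_body (K : set V) : Prop :=
  K !=set0 /\ compact K /\ convex_set K.

Definition h (K : set V) (u : V) : R := sup [set dot x u | x in K].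

Definition F (K : set V) (z : V) : set V := [set x | K x /\ dot x z = h K z].

Definition NC (K : set V) (x : V) : set V := [set u | dot x u = h K u].

Definition span (S : set V) : set V :=
  [set x | exists k (v : 'I_k -> V) (c : 'I_k -> R),
     (forall i, S (v i)) /\ x = \sum_(i < k) c i *: v i].
Definition aff (S : set V) : set V :=
  [set x | exists k (v : 'I_k -> V) (c : 'I_k -> R),
     (forall i, S (v i)) /\ \sum_(i < k) c i = 1 /\ x = \sum_(i < k) c i *: v i].

Definition relint (S : set V) : set V :=
  [set x | S x /\ exists e : R, 0 < e /\
     forall y, aff S y -> dot (y - x) (y - x) < e ^+ 2 -> S y].

(* N(K,F) := N(K,x) for x in the relative interior of F *)
Definition NF (K : set V) (Fc : set V) : set V :=
  [set u | exists x, relint Fc x /\ NC K x u].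

Definition face (C G : set V) : Prop :=
  G `<=` C /\ convex_set G /\
  forall x y t, C x -> C y -> 0 < t < 1 -> G ((1 - t) *: x + t *: y) -> G x /\ G y.

(* touching cone T(K,z): the (unique) face of N(K,F(K,z)) containing z in its
   relative interior; written as the intersection of all such faces *)
Definition T (K : set V) (z : V) : set V :=
  [set u | forall G, face (NF K (F K z)) G -> relint G z -> G u].

Definition perp (S : set V) : set V := [set u | forall x, span S x -> dot u x = 0].

Definition TS (K : set V) (z : V) : set V := perp (T K z).

Definition has_dim_ge (S : set V) (k : nat) : Prop :=
  exists s : seq V, [/\ size s = k, (forall x, x \in s -> S x) & free s].
Definition sdim (S : set V) : nat := \max_(k < n.+1 | `[< has_dim_ge S k >]) k.

Definition hyp (a : V) : set V := [set x | dot a x = 0].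

Definition ext (Ks : 'I_n.-1 -> set V) : set V :=
  [set z | sphere z /\ exists a : 'I_n.-1 -> V,
     (forall i, a i != 0 /\ T (Ks i) z `<=` hyp (a i)) /\
     sdim (\bigcap_(i in [set: 'I_n.-1]) hyp (a i)) = 1%N].

Definition en : V := \row_(i < n) (i.+1 == n)%:R.
Definition Lsp : set V := [set x | dot x en = 0].
Definition BL : set V := [set x | dot x x <= 1 /\ Lsp x].

Definition famKB (K : set V) (j : nat) : 'I_n.-1 -> set V :=
  fun i => if (i < j)%N then K else BL.

End Convex.

(* Main.v *)
Require Import Defs.
From HB Require Import structures.
From mathcomp Require Import all_boot all_order all_algebra.
From mathcomp Require Import all_classical all_reals all_analysis.
From mathcomp Require Import ring lra zify.
Import Order.TTheory GRing.Theory Num.Theory.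
Import numFieldNormedType.Exports.
Local Open Scope classical_set_scope.
Local Open Scope ring_scope.

Section S.
Variables (R : realType) (n : nat).
Notation V := 'rV[R]_n.
Notation dot := (@dot R n).
Notation vspan := (@vector.span _ _).

Lemma dotC (x y : V) : dot x y = dot y x.
Proof. by rewrite /Defs.dot; apply: eq_bigr => i _; rewrite mulrC. Qed.

Lemma dotDl (x y w : V) : dot (x + y) w = dot x w + dot y w.
Proof. by rewrite /Defs.dot -big_split; apply: eq_bigr => i _; rewrite mxE mulrDl. Qed.

Lemma dotZl (c : R) (x w : V) : dot (c *: x) w = c * dot x w.
Proof. by rewrite /Defs.dot mulr_sumr; apply: eq_bigr => i _; rewrite mxE mulrA. Qed.

Lemma dot0l (w : V) : dot 0 w = 0.
Proof. by rewrite /Defs.dot big1 // => i _; rewrite mxE mul0r. Qed.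

Lemma dotNl (x w : V) : dot (- x) w = - dot x w.
Proof. by rewrite -scaleN1r dotZl mulN1r. Qed.

Lemma dotBl (x y w : V) : dot (x - y) w = dot x w - dot y w.
Proof. by rewrite dotDl dotNl. Qed.

Lemma dot_suml (I : Type) (r : seq I) (P : pred I) (F : I -> V) w :
  dot (\sum_(i <- r | P i) F i) w = \sum_(i <- r | P i) dot (F i) w.
Proof.
elim/big_rec2: _ => [|i y1 y2 _ <-]; first by rewrite dot0l.
by rewrite dotDl.
Qed.

Lemma dotDr (x y w : V) : dot w (x + y) = dot w x + dot w y.
Proof. by rewrite !(dotC w) dotDl. Qed.
Lemma dotZr (c : R) (x w : V) : dot w (c *: x) = c * dot w x.
Proof. by rewrite !(dotC w) dotZl. Qed.
Lemma dot0r (w : V) : dot w 0 = 0.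
Proof. by rewrite dotC dot0l. Qed.
Lemma dotNr (x w : V) : dot w (- x) = - dot w x.
Proof. by rewrite !(dotC w) dotNl. Qed.
Lemma dotBr (x y w : V) : dot w (x - y) = dot w x - dot w y.
Proof. by rewrite dotDr dotNr. Qed.
Lemma dot_sumr (I : Type) (r : seq I) (P : pred I) (F : I -> V) w :
  dot w (\sum_(i <- r | P i) F i) = \sum_(i <- r | P i) dot w (F i).
Proof. by rewrite dotC dot_suml; apply: eq_bigr => i _; rewrite dotC. Qed.

Lemma dot_ge0 (x : V) : 0 <= dot x x.
Proof. by apply: sumr_ge0 => i _; rewrite -expr2 sqr_ge0. Qed.

Lemma dot_eq0 (x : V) : (dot x x == 0) = (x == 0).
Proof.
apply/idP/idP => [|/eqP ->]; last by rewrite dot0l.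
rewrite /Defs.dot psumr_eq0 => [/allP H|i _]; last by rewrite -expr2 sqr_ge0.
apply/eqP/matrixP => i k; rewrite (ord1 i) mxE.
by have := H k (mem_index_enum k); rewrite -expr2 sqrf_eq0 => /eqP.
Qed.


Lemma span_dotl (s : seq V) x w :
  (forall v, v \in s -> dot v x = 0) -> w \in vspan s -> dot w x = 0.
Proof.
move=> H wS; rewrite (coord_span (X := in_tuple s) wS) dot_suml big1 // => i _.
by rewrite dotZl H ?mulr0 // mem_nth.
Qed.

Lemma free_size (s : seq V) : free s -> (size s <= n)%N.
Proof.
move/eqP <-; have := dimvS (subvf (vspan s)); rewrite dimvf /=.
by rewrite /dim /= mul1n.
Qed.

Lemma hdg_le (S : set V) k k' : (k' <= k)%N -> has_dim_ge S k -> has_dim_ge S k'.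
Proof.
rewrite /has_dim_ge => le [s [sz Ss fs]]; exists (take k' s); split.
- by rewrite size_takel // sz.
- by move=> x /mem_take; apply: Ss.
- by move: fs; rewrite -{1}(cat_take_drop k' s) => /catl_free.
Qed.

Lemma hdg0 (S : set V) : has_dim_ge S 0.
Proof. by exists [::]; split => //; exact: nil_free. Qed.

Lemma hdg_n (S : set V) k : has_dim_ge S k -> (k <= n)%N.
Proof. by move=> [s [<- _ /free_size]]. Qed.

Lemma sdimE (S : set V) k : (k <= sdim S)%N <-> has_dim_ge S k.
Proof.
split.
- move=> le; apply: (@hdg_le S _ _ le); rewrite /sdim.
  apply: (big_ind (has_dim_ge S)); first exact: hdg0.
  + by move=> x y Hx Hy; rewrite /maxn; case: ifP.
  + by move=> i /asboolP.
- move=> H; have kn : (k < n.+1)%N by rewrite ltnS (@hdg_n S _ H).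
  rewrite /sdim; apply: (@leq_bigmax_cond _ _ (fun i : 'I_n.+1 => nat_of_ord i) (Ordinal kn)).
  exact/asboolP.
Qed.


Definition rowdot (b : seq V) (x : V) : 'rV[R]_(size b) := \row_(i < size b) dot b`_i x.

Lemma rowdot_lin b : linear (rowdot b).
Proof. by move=> a x y; apply/matrixP => i k; rewrite !mxE dotDr dotZr. Qed.

HB.instance Definition _ (b : seq V) :=
  GRing.isLinear.Build R V 'rV[R]_(size b) *:%R (rowdot b) (rowdot_lin b).

Lemma RN (b : seq V) : exists K : {vspace V},
  (n <= \dim K + size b)%N /\ forall x, x \in K -> forall v, v \in b -> dot v x = 0.
Proof.
exists (lker (linfun (rowdot b))); split.
- have dV : \dim (fullv : {vspace V}) = n by rewrite dimvf dim_matrix; exact: mul1n.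
  have := limg_ker_dim (linfun (rowdot b)) fullv; rewrite capfv dV => E; rewrite -[X in (X <= _)%N]E.
  rewrite leq_add2l; have := dimvS (subvf (linfun (rowdot b) @: fullv)%VS).
  by rewrite dimvf dim_matrix mul1r.
- move=> x; rewrite memv_ker lfunE /= => /eqP H v vb.
  have ib : (index v b < size b)%N by rewrite index_mem.
  have := congr1 (fun M : 'rV_(size b) => M 0 (Ordinal ib)) H.
  by rewrite !mxE /= nth_index.
Qed.

Lemma HD (S : set V) (K : {vspace V}) k :
  (forall x, x \in K -> S x) -> (k <= \dim K)%N -> has_dim_ge S k.
Proof.
move=> KS le; apply: (@hdg_le S _ _ le); exists (vbasis K); split.
- exact: size_tuple.
- by move=> x /vbasis_mem; apply: KS.
- exact: basis_free (vbasisP K).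
Qed.

Definition Iset (s : seq V) : set V := [set x | forall v, v \in s -> dot v x = 0].

Lemma D1 (u : seq V) : free u -> (n < size u + 2)%N -> ~ has_dim_ge (Iset u) 2.
Proof.
move=> fu sz [s [s2 Hs fs]].
have cap : (vspan u :&: vspan s)%VS = 0%VS.
  apply/eqP; rewrite -subv0; apply/subvP => w /memv_capP [wu wW]; rewrite memv0.
  have Iw : forall v, v \in u -> dot v w = 0.
    move=> v vu; rewrite dotC; apply: (@span_dotl s v w _ wW) => x' xs.
    by rewrite dotC; apply: (Hs x' xs).
  by rewrite -dot_eq0 (@span_dotl u w w Iw wu).
have := dimv_sum_cap (vspan u) (vspan s); rewrite cap dimv0 addn0 (eqP fu) (eqP fs) s2.
have := dimvS (subvf (vspan u + vspan s)%VS); rewrite dimvf dim_matrix mul1r.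
move=> le eq; move: le; rewrite eq => le.
by move: sz; rewrite ltnNge le.
Qed.

Lemma D2 (u : seq V) : (\dim (vspan u) + 2 <= n)%N -> has_dim_ge (Iset u) 2.
Proof.
move=> le; have [K [dK HK]] := RN (vbasis (vspan u)).
apply: (@HD _ K).
- move=> x xK v vu.
  have : v \in vspan (vbasis (vspan u)) by rewrite (span_basis (vbasisP _)) memv_span.
  move=> vS; apply: (@span_dotl _ x v _ vS) => w wb.
  by apply: HK.
- move: dK; rewrite size_tuple => dK.
  by rewrite -(leq_add2r (\dim (vspan u))) addnC (leq_trans le) // addnC.
Qed.


Lemma EXT (W : {vspace V}) k : forall s, free s ->
  (k + size s <= \dim (vspan s + W))%N ->
  exists t, [/\ size t = k, {subset t <= W} & free (s ++ t)].
Proof.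
elim: k => [|k IH] s fs le.
  by exists [::]; split => //; rewrite cats0.
have : ~~ (W <= vspan s)%VS.
  apply/negP => /addv_idPl E; move: le; rewrite E (eqP fs).
  by rewrite addSn ltnNge leq_addl.
case/subvPn => w wW wS.
have fs' : free (s ++ [:: w]).
  have P : perm_eq (s ++ [:: w]) (w :: s) by rewrite perm_catC.
  by rewrite (perm_free P) free_cons wS fs.
have E : (vspan (s ++ [:: w]) + W = vspan s + W)%VS.
  rewrite span_cat span_seq1 -addvA; congr (_ + _)%VS.
  by apply/addv_idPr; rewrite -memvE.
have [t [st tW ft]] : exists t, [/\ size t = k, {subset t <= W} & free ((s ++ [:: w]) ++ t)].
  by apply: IH fs' _; rewrite E size_cat /= addn1 -addSnnS.
exists (w :: t); split => //.
- by rewrite /= st.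
- by move=> x; rewrite inE => /orP [/eqP ->|/tW].
- by rewrite -cat1s catA.
Qed.


Notation en := (@en R n).
Notation BL := (@BL R n).
Notation Lsp := (@Lsp R n).



Section N0.
Variable n0 : (0 < n)%N.
Let i0 : 'I_n := Ordinal (eq_ind_r is_true n0 (ltn_predL n)).

Lemma dot_en (x : V) : dot x en = x 0 i0.
Proof.
rewrite /Defs.dot (bigD1 i0) //= big1 ?addr0.
  by rewrite /Defs.en mxE /= prednK // eqxx mulr1.
move=> i ii0; rewrite /Defs.en mxE; case: eqP => [E|]; last by rewrite mulr0.
move: ii0; have -> : i = i0 by apply/val_inj; exact: (congr1 predn E).
by rewrite eqxx.
Qed.

Lemma en_en : dot en en = 1.
Proof. by rewrite dot_en /Defs.en mxE /= prednK // eqxx. Qed.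

End N0.

Definition proj (u : V) : V := u - dot u en *: en.

Lemma proj_lin : linear proj.
Proof.
move=> a x y; rewrite /proj dotDl dotZl scalerDl scalerBr -scalerA.
by rewrite addrACA opprD.
Qed.

HB.instance Definition _ := GRing.isLinear.Build R V V *:%R proj proj_lin.

Lemma nrm2_ge0 (x : V) : 0 <= dot x x. Proof. exact: dot_ge0. Qed.

Lemma dot_expand (x y : V) : dot (x - y) (x - y) = dot x x - 2 * dot x y + dot y y.
Proof. rewrite dotBl !dotBr (dotC y x); lra. Qed.

Lemma dot_le1 (x q : V) : dot x x <= 1 -> dot q q = 1 -> dot x q <= 1.
Proof. move=> hx hq; have := dot_ge0 (x - q); rewrite dot_expand; lra. Qed.

Lemma dot_eq1 (x q : V) : dot x x <= 1 -> dot q q = 1 -> dot x q = 1 -> x = q.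
Proof.
move=> hx hq e; have := dot_ge0 (x - q); rewrite dot_expand e hq => h.
have : dot (x - q) (x - q) == 0.
  by rewrite eq_le dot_ge0 andbT dot_expand e hq; lra.
by rewrite dot_eq0 subr_eq0 => /eqP.
Qed.


Lemma sup_max (S : set R) m : S m -> (forall s, S s -> s <= m) -> sup S = m.
Proof.
move=> Sm ub; apply/eqP; rewrite eq_le; apply/andP; split.
  by apply: ge_sup; [exists m|].
have hs : has_sup S by split; [exists m| exists m].
exact: (sup_upper_bound hs).
Qed.

Lemma proj_L (x u : V) : Lsp x -> dot x u = dot x (proj u).
Proof. by rewrite /Defs.Lsp /= /proj dotBr dotZr => ->; rewrite mulr0 subr0. Qed.

Section N0b.
Variable n0 : (0 < n)%N.

Lemma Lsp_proj u : Lsp (proj u).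
Proof. by rewrite /Defs.Lsp /= /proj dotBl dotZl (en_en n0) mulr1 subrr. Qed.

Lemma proj_en : proj en = 0.
Proof. by rewrite /proj (en_en n0) scale1r subrr. Qed.

Lemma BL_bound (x u : V) : BL x -> dot x u <= Num.sqrt (dot (proj u) (proj u)).
Proof.
move=> [hx Lx]; rewrite (@proj_L x u Lx).
set pu := proj u; set r := Num.sqrt (dot pu pu).
have [r0|rp] := eqVneq r 0.
  have : pu = 0 by apply/eqP; rewrite -dot_eq0 eq_le dot_ge0 andbT -sqrtr_eq0 -/r r0.
  by move=> ->; rewrite dot0r r0.
have rpos : 0 < r by rewrite lt_def rp sqrtr_ge0.
have r2 : r ^+ 2 = dot pu pu by rewrite sqr_sqrtr ?dot_ge0.
have hq : dot (r^-1 *: pu) (r^-1 *: pu) = 1.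
  by rewrite dotZl dotZr -r2 mulrA -expr2 exprVn mulVf // expf_neq0.
have := @dot_le1 _ _ hx hq; rewrite dotZr => h.
have : r * (r^-1 * dot x pu) <= r * 1 by rewrite ler_pM2l.
by rewrite mulrA mulfV // mul1r mulr1.
Qed.

Lemma h_BL (u : V) : h BL u = Num.sqrt (dot (proj u) (proj u)).
Proof.
rewrite /h; apply: sup_max; last by move=> _ [x Bx <-]; exact: BL_bound.
set pu := proj u; set r := Num.sqrt (dot pu pu).
have [r0|rp] := eqVneq r 0.
  exists 0; last by rewrite dot0l r0.
  by split; [rewrite dot0l|rewrite /Defs.Lsp /= dot0l].
have rpos : 0 < r by rewrite lt_def rp sqrtr_ge0.
have r2 : r ^+ 2 = dot pu pu by rewrite sqr_sqrtr ?dot_ge0.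
have hq : dot (r^-1 *: pu) (r^-1 *: pu) = 1.
  by rewrite dotZl dotZr -r2 mulrA -expr2 exprVn mulVf // expf_neq0.
exists (r^-1 *: pu).
  split; first by rewrite hq.
  by rewrite /Defs.Lsp /= dotZl Lsp_proj mulr0.
rewrite (@proj_L _ u); last by rewrite /Defs.Lsp /= dotZl Lsp_proj mulr0.
by rewrite dotZl -r2 expr2 mulrA mulVf // mul1r.
Qed.

End N0b.


Lemma aff_closed (S C : set V) :
  (forall k (v : 'I_k -> V) (c : 'I_k -> R), (forall i, C (v i)) -> C (\sum_i c i *: v i)) ->
  S `<=` C -> aff S `<=` C.
Proof. by move=> HC SC y [k [v [c [Sv [_ ->]]]]]; apply: HC => i; apply: SC. Qed.

Lemma Lsp_closed k (v : 'I_k -> V) (c : 'I_k -> R) :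
  (forall i, Lsp (v i)) -> Lsp (\sum_i c i *: v i).
Proof.
move=> H; rewrite /Defs.Lsp /= dot_suml big1 // => i _.
by rewrite dotZl; have := H i; rewrite /Defs.Lsp /= => ->; rewrite mulr0.
Qed.

Definition P0 : set V := [set u | proj u = 0].

Lemma P0_closed k (v : 'I_k -> V) (c : 'I_k -> R) :
  (forall i, P0 (v i)) -> P0 (\sum_i c i *: v i).
Proof.
move=> H; rewrite /P0 /= linear_sum big1 // => i _.
by rewrite linearZ /=; have := H i; rewrite /P0 /= => ->; rewrite scaler0.
Qed.

Definition Qp (p : V) : set V := [set u | proj u = dot u p *: p].

Lemma Qp_closed p k (v : 'I_k -> V) (c : 'I_k -> R) :
  (forall i, Qp p (v i)) -> Qp p (\sum_i c i *: v i).
Proof.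
move=> H; rewrite /Qp /= linear_sum dot_suml scaler_suml; apply: eq_bigr => i _.
by rewrite linearZ /=; have := H i; rewrite /Qp /= => ->; rewrite dotZl scalerA.
Qed.

Lemma convex_face (C : set V) : Defs.convex_set C -> face C C.
Proof. move=> cC; split; first by []. split; first exact: cC. by move=> x y t Cx Cy _ _; split. Qed.

Lemma T_self (X : set V) z : T X z z.
Proof. by move=> G _ [Gz _]. Qed.

Lemma T_sub (X : set V) z G : face (NF X (F X z)) G -> relint G z -> T X z `<=` G.
Proof. by move=> fG rG u Tu; apply: Tu. Qed.


Section Case1.
Variable n0 : (0 < n)%N.

Lemma BL_Lsp : BL `<=` Lsp. Proof. by move=> x []. Qed.

Lemma aff_BL : aff BL `<=` Lsp.
Proof. apply: aff_closed; [exact: Lsp_closed | exact: BL_Lsp]. Qed.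

Lemma L_aff (y : V) : Lsp y -> aff BL y.
Proof.
move=> Ly; set t := dot y y; set c := 1 + t.
have t0 : 0 <= t by exact: dot_ge0.
have c0 : 0 < c by rewrite /c; lra.
exists 2%N, (fun i : 'I_2 => if i == ord0 then c^-1 *: y else 0),
  (fun i : 'I_2 => if i == ord0 then c else 1 - c); split; last split.
- move=> i; case: eqP => _; last first.
    by split; [rewrite dot0l | rewrite /Defs.Lsp /= dot0l].
  split; last by rewrite /Defs.Lsp /= dotZl Ly mulr0.
  rewrite dotZl dotZr mulrA -expr2 exprVn -/t mulrC ler_pdivrMr ?exprn_gt0 // mul1r.
  rewrite /c; nra.
- by rewrite !big_ord_recl big_ord0 /=; lra.
- rewrite !big_ord_recl big_ord0 /= scalerA mulfV ?gt_eqF // scale1r scaler0.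
  by rewrite !addr0.
Qed.

Lemma relint_BL0 : relint BL 0.
Proof.
split; first by split; [rewrite dot0l | rewrite /Defs.Lsp /= dot0l].
exists 1; split; first exact: ltr01.
move=> y /aff_BL Ly; rewrite subr0 expr1n => lt; split => //; exact: ltW.
Qed.

Lemma NF_BL_P0 : NF BL BL = P0.
Proof.
apply/seteqP; split; last first.
  move=> u Pu; exists 0; split; first exact: relint_BL0.
  by rewrite /NC /= dot0l (h_BL n0) Pu dot0l sqrtr0.
move=> u [x [[[Bx Lx] [e [e0 He]]] Nx]].
move: Nx; rewrite /NC /= (h_BL n0) => Nx.
apply/eqP; rewrite -dot_eq0; set pu := proj u; set d := dot pu pu.
have d0 : 0 <= d by exact: dot_ge0.
rewrite eq_le d0 andbT; rewrite leNgt; apply/negP => dpos.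
have d1 : 0 < 1 + d by lra.
set del := e / (1 + d).
have del0 : 0 < del by rewrite /del divr_gt0.
have edel : e = del * (1 + d) by rewrite /del divfK // gt_eqF.
set y := x + del *: pu.
have Ly : Lsp y.
  by rewrite /Defs.Lsp /= dotDl dotZl Lx (Lsp_proj n0) mulr0 addr0.
have By : BL y.
  apply: He; first exact: L_aff.
  have -> : y - x = del *: pu by rewrite /y addrAC subrr add0r.
  rewrite dotZl dotZr -/d edel; nra.
have := @BL_bound y u By; rewrite -Nx /y dotDl dotZl.
rewrite (@proj_L pu u (Lsp_proj n0 u)) -/pu -/d => h.
have : 0 < del * d by rewrite mulr_gt0.
lra.
Qed.

Lemma F_BL_pm z : z = en \/ z = - en -> F BL z = BL.
Proof.
move=> hz; have pz : proj z = 0.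
  by case: hz => ->; rewrite ?linearN /= (proj_en n0) ?oppr0.
apply/seteqP; split; first by move=> x [].
move=> x Bx; split => //; rewrite (h_BL n0) pz dot0l sqrtr0.
rewrite (@proj_L x z (@BL_Lsp x Bx)) pz; exact: dot0r.
Qed.

Lemma T_BL_pm z : z = en \/ z = - en -> T BL z `<=` P0.
Proof.
move=> hz; apply: (@T_sub BL z P0); rewrite ?(@F_BL_pm z hz) ?NF_BL_P0.
  apply: convex_face => x y t Px Py _; rewrite /P0 /= linearD !linearZ /=.
  by rewrite Px Py !scaler0 addr0.
have pz : P0 z by case: hz => ->; rewrite /P0 /= ?linearN /= (proj_en n0) ?oppr0.
split => //; exists 1; split; first exact: ltr01.
move=> y Ay _; apply: (@aff_closed P0 P0 _ _ y Ay) => // k v c; exact: P0_closed.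
Qed.

End Case1.


Lemma proj_decomp (u : V) : u = proj u + dot u en *: en.
Proof. by rewrite /proj subrK. Qed.

Lemma dot_proj_le (n0 : (0 < n)%N) (w : V) : dot (proj w) (proj w) <= dot w w.
Proof.
have E := proj_decomp w; set a := dot w en in E *; set pw := proj w in E *.
have L := Lsp_proj n0 w; rewrite /Defs.Lsp /= -/pw in L.
have -> : dot w w = dot (pw + a *: en) (pw + a *: en) by rewrite -E.
clearbody a pw; rewrite dotDl !dotDr !dotZl !dotZr (en_en n0) L dotC L.
have := sqr_ge0 a; rewrite expr2; lra.
Qed.

Section Case2.
Variables (n0 : (0 < n)%N) (z : V) (sz : sphere z) (zne : z <> en) (zne' : z <> - en).

Lemma pz_neq0 : proj z != 0.
Proof.
apply/negP => /eqP pz0; have E := proj_decomp z; rewrite pz0 add0r in E.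
move: E; set c := dot z en; clearbody c => E.
move: sz; rewrite /sphere /= E dotZl dotZr (en_en n0) mulr1 -expr2 => /eqP.
rewrite sqrf_eq1 => /orP [/eqP c1|/eqP c1]; move: E; rewrite c1.
  by rewrite scale1r.
by rewrite scaleN1r.
Qed.

Let pz := proj z.
Let r := Num.sqrt (dot pz pz).
Let p := r^-1 *: pz.

Lemma r_gt0 : 0 < r.
Proof. by rewrite sqrtr_gt0 lt_def dot_ge0 andbT dot_eq0 pz_neq0. Qed.

Lemma r_neq0 : r != 0.
Proof. by rewrite gt_eqF // r_gt0. Qed.

Lemma r2 : r ^+ 2 = dot pz pz.
Proof. by rewrite sqr_sqrtr ?dot_ge0. Qed.

Lemma pp : dot p p = 1.
Proof.
by rewrite dotZl dotZr -r2 mulrA -expr2 exprVn mulVf // expf_neq0 // gt_eqF // r_gt0.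
Qed.

Lemma Lp : Lsp p.
Proof. by rewrite /Defs.Lsp /= dotZl (Lsp_proj n0) mulr0. Qed.

Lemma pz_eq : pz = r *: p.
Proof. by rewrite /p scalerA mulfV ?scale1r // gt_eqF // r_gt0. Qed.

Lemma dot_zp : dot z p = r.
Proof.
by rewrite dotC (@proj_L p z Lp) -/pz pz_eq dotZr pp mulr1.
Qed.

Lemma F_z : F BL z = [set p].
Proof.
apply/seteqP; split.
  move=> x [Bx]; rewrite (h_BL n0) -/pz -/r => e.
  apply: (@dot_eq1 x p Bx.1 pp).
  by rewrite /p dotZr -(@proj_L x z Bx.2) e mulVf // r_neq0.
move=> x ->; split; first by split; [rewrite pp lexx | exact: Lp].
by rewrite (h_BL n0) dotC dot_zp.
Qed.

Lemma relint_p : relint [set p] p.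
Proof.
split => //; exists 1; split; first exact: ltr01.
move=> y [k [v [c [Sv [c1 ->]]]]] _.
have -> : \sum_(i < k) c i *: v i = \sum_(i < k) c i *: p by apply: eq_bigr => i _; rewrite Sv.
by rewrite -scaler_suml c1 scale1r.
Qed.

Definition Hs : set V := [set u | Qp p u /\ 0 <= dot u p].

Lemma NF_z : NF BL (F BL z) = Hs.
Proof.
rewrite F_z; apply/seteqP; split.
  move=> u [x [[-> _]]]; rewrite /NC /= (h_BL n0) => e.
  set pu := proj u in e *; set ru := Num.sqrt (dot pu pu) in e *.
  have ru0 : 0 <= ru by exact: sqrtr_ge0.
  rewrite /Hs /Qp /= dotC e; split => //.
  have [r0|rp] := eqVneq ru 0.
    have : pu = 0 by apply/eqP; rewrite -dot_eq0 eq_le dot_ge0 andbT -sqrtr_eq0 -/ru r0.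
    by move=> pu0; rewrite -/pu pu0 r0 scale0r.
  have rpos : 0 < ru by rewrite lt_def rp.
  have rr2 : ru ^+ 2 = dot pu pu by rewrite sqr_sqrtr ?dot_ge0.
  have hq : dot (ru^-1 *: pu) (ru^-1 *: pu) = 1.
    by rewrite dotZl dotZr -rr2 mulrA -expr2 exprVn mulVf // expf_neq0.
  have : p = ru^-1 *: pu.
    apply: (@dot_eq1 p _ _ hq); first by rewrite pp.
    by rewrite dotZr -(@proj_L p u Lp) e mulVf.
  by move=> ->; rewrite scalerA mulfV // scale1r.
move=> u [Qu c0]; exists p; split; first exact: relint_p.
rewrite /NC /= (h_BL n0) Qu dotZl dotZr pp mulr1 -expr2 sqrtr_sqr ger0_norm //.
by rewrite dotC.
Qed.

Lemma en_T : T BL z en.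
Proof.
move=> G [GC [_ Gext]] [Gz _]; move: GC Gext; rewrite NF_z => GC Gext.
have Hen : Hs en.
  split; last by rewrite dotC Lp.
  by rewrite /Qp /= (proj_en n0) dotC Lp scale0r.
have H2 : Hs (2%:R *: z - en).
  have e1 : dot (2%:R *: z - en) p = 2%:R * r by rewrite dotBl dotZl dot_zp (dotC en) Lp subr0.
  split; last by rewrite e1 mulr_ge0 // ltW // r_gt0.
  rewrite /Qp /= e1 linearB linearZ /= (proj_en n0) subr0 -/pz pz_eq scalerA //.
have h2 : (1 - 2%:R^-1 : R) = 2%:R^-1 by field.
have hz : (1 - 2%:R^-1) *: (2%:R *: z - en) + 2%:R^-1 *: en = z.
  by rewrite h2 -scalerDr subrK scalerA mulVf ?scale1r // pnatr_eq0.
have ht : 0 < (2%:R^-1 : R) < 1 by apply/andP; split; lra.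
have := Gext _ _ _ H2 Hen ht; rewrite hz => /(_ Gz) [].
by [].
Qed.

Lemma T_z_sub : T BL z `<=` Hs.
Proof.
apply: (@T_sub BL z Hs); rewrite ?NF_z.
  apply: convex_face => x y t [Qx x0] [Qy y0] /andP [t0 t1]; split.
    by rewrite /Qp /= linearD !linearZ /= Qx Qy dotDl !dotZl !scalerA -scalerDl; congr (_ *: _); ring.
  by rewrite dotDl !dotZl addr_ge0 // mulr_ge0 // subr_ge0.
have Hz : Hs z.
  split; last by rewrite dot_zp ltW // r_gt0.
  by rewrite /Qp /= dot_zp -/pz pz_eq.
split => //; exists r; split; first exact: r_gt0.
move=> y Ay lt; have Qy : Qp p y.
  apply: (@aff_closed Hs (Qp p) _ _ y Ay); last by move=> x [].
  by move=> k v c; exact: Qp_closed.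
split => //; set c := dot y p.
have Qw : Qp p (y - z).
  by rewrite /Qp /= linearB /= Qy Hz.1 dotBl -scalerBl.
have := dot_proj_le n0 (y - z); rewrite Qw dotZl dotZr pp mulr1 dotBl dot_zp -/c => le.
have := r_gt0 => r0.
rewrite leNgt; apply/negP => cneg.
have : r ^+ 2 <= (c - r) * (c - r) by nra.
lra.
Qed.

Lemma Hs_perp (w : V) : dot w z = 0 -> dot w en = 0 -> forall u, Hs u -> dot w u = 0.
Proof.
move=> wz wen u [Qu _].
have wp : dot w p = 0.
  by rewrite /p dotZr /pz /proj dotBr dotZr wz wen mulr0 subr0 mulr0.
rewrite (proj_decomp u) Qu dotDr !dotZr wen mulr0 addr0.
by move: wp; rewrite /p dotZr => ->; rewrite mulr0.
Qed.

End Case2.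


Lemma hyp_perp (X : set V) a : perp X a -> X `<=` hyp a.
Proof.
move=> Pa x Xx; apply: Pa; exists 1%N, (fun _ => x), (fun _ => 1); split => //.
by rewrite big_ord1 scale1r.
Qed.

Lemma perp_hyp (X : set V) a : X `<=` hyp a -> perp X a.
Proof.
move=> H x [k [v [c [Xv ->]]]]; rewrite dot_sumr big1 // => i _.
by rewrite dotZr (H _ (Xv i)) mulr0.
Qed.

Lemma perp_span (X : set V) (s : seq V) w :
  (forall v, v \in s -> perp X v) -> w \in vspan s -> perp X w.
Proof. by move=> H ws y Sy; apply: (@span_dotl s y w _ ws) => v vs; apply: H. Qed.

Lemma bigcap_Iset (a : 'I_n.-1 -> V) :
  \bigcap_(i in [set: 'I_n.-1]) hyp (a i) = Iset (map a (enum 'I_n.-1)).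
Proof.
apply/seteqP; split.
  by move=> x Hx v /mapP [i _ ->]; exact: (Hx i Logic.I).
by move=> x Hx i _; apply: Hx; apply: map_f; rewrite mem_enum.
Qed.

Variables (K : set V) (j : nat).
Notation Ks := (famKB K j).

Lemma ext_fwd z : (0 < n)%N -> ext Ks z -> exists a : 'I_n.-1 -> V,
  [/\ forall i, T (Ks i) z `<=` hyp (a i), free (map a (enum 'I_n.-1))
    & ~ has_dim_ge (Iset (map a (enum 'I_n.-1))) 2].
Proof.
move=> n0 [_ [a [Ha sd]]]; exists a.
have n2 : ~ has_dim_ge (Iset (map a (enum 'I_n.-1))) 2.
  by rewrite -bigcap_Iset -sdimE sd.
split => //; first by move=> i; case: (Ha i).
apply/idPn => nf; apply: n2; apply: D2.
have := dim_span (map a (enum 'I_n.-1)); rewrite size_map size_enum_ord.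
move: nf; rewrite /free size_map size_enum_ord => nf le.
have lt : (\dim (vspan (map a (enum 'I_n.-1))) < n.-1)%N by rewrite ltn_neqAle nf le.
lia.
Qed.

Lemma ext_bwd z (u : seq V) : (0 < n)%N -> sphere z -> size u = n.-1 -> free u ->
  (forall i : 'I_n.-1, T (Ks i) z `<=` hyp (nth 0 u i)) -> ext Ks z.
Proof.
move=> n0 sz su fu H; split => //; exists (fun i => nth 0 u i); split.
  move=> i; split; last exact: H.
  by apply: (free_not0 fu); rewrite mem_nth // su.
have E : \bigcap_(i in [set: 'I_n.-1]) hyp (nth 0 u i) = Iset u.
  rewrite bigcap_Iset; congr Iset.
  apply: (@eq_from_nth _ 0); first by rewrite size_map size_enum_ord su.
  move=> i; rewrite size_map size_enum_ord => ilt.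
  by rewrite (nth_map (Ordinal ilt)) ?size_enum_ord // nth_enum_ord.
rewrite E; apply/eqP; rewrite eqn_leq; apply/andP; split.
  rewrite leqNgt; apply/negP => /sdimE; apply: D1 => //; rewrite su; lia.
apply/sdimE; exists [:: z]; split => //.
  move=> x; rewrite inE => /eqP -> v vu.
  have iu : (index v u < n.-1)%N by rewrite -su index_mem.
  have := H (Ordinal iu) z (T_self _ _); rewrite /= nth_index //.
rewrite seq1_free -dot_eq0; move: sz; rewrite /sphere /= => ->; exact: oner_neq0.
Qed.


Lemma famK (i : 'I_n.-1) : (i < j)%N -> Ks i = K.
Proof. by rewrite /famKB => ->. Qed.
Lemma famB (i : 'I_n.-1) : ~~ (i < j)%N -> Ks i = BL.
Proof. by rewrite /famKB => /negbTE ->. Qed.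

Lemma fwd_S z (a : 'I_n.-1 -> V) : (j <= n.-1)%N ->
  (forall i, T (Ks i) z `<=` hyp (a i)) -> free (map a (enum 'I_n.-1)) ->
  has_dim_ge (TS K z) j.
Proof.
move=> jn Ha fu; set u := map a (enum 'I_n.-1).
exists (take j u); split.
- by rewrite size_takel // size_map size_enum_ord.
- move=> x xt.
  have ix : (index x (take j u) < j)%N.
    by rewrite -{2}(@size_takel j _ u) ?index_mem // size_map size_enum_ord.
  have ij : (index x (take j u) < n.-1)%N by exact: leq_trans ix jn.
  rewrite -(nth_index 0 xt) nth_take // /u (nth_map (Ordinal ij)) ?size_enum_ord //.
  have -> : nth (Ordinal ij) (enum 'I_n.-1) (index x (take j u)) = Ordinal ij.
    by apply/val_inj; rewrite /= nth_enum_ord.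
  apply: perp_hyp; rewrite -(@famK (Ordinal ij)) //; exact: Ha.
- by move: fu; rewrite -/u -{1}(cat_take_drop j u) => /catl_free.
Qed.


Lemma sphere_pm z : (0 < n)%N -> (z = en \/ z = - en) -> sphere z.
Proof.
by move=> n0 hz; case: hz => ->; rewrite /sphere /= ?dotNl ?dotNr ?opprK (en_en n0).
Qed.

Lemma case1 z : (3 <= n)%N -> (1 <= j)%N -> (j <= n - 2)%N -> (z = en \/ z = - en) ->
  (ext Ks z <-> (j <= sdim (TS K z))%N).
Proof.
move=> n3 j1 jn hz; have n0 : (0 < n)%N by lia.
have jn1 : (j <= n.-1)%N by lia.
rewrite sdimE; split.
  by move=> /(@ext_fwd z n0) [a [Ha fu _]]; exact: (@fwd_S z a jn1 Ha fu).
move=> [s [ss Ss fs]].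
have [Lv [dL HL]] := RN [:: en].
have [t [st tL ft]] : exists t, [/\ size t = (n.-1 - j)%N, {subset t <= Lv} & free (s ++ t)].
  apply: EXT fs _; have := dimvS (addvSr (vspan s) Lv); move: dL; rewrite /= ss -subn1 => h1 h2; apply: leq_trans h2; rewrite subnK; [|by rewrite subn1]; rewrite leq_subLR addnC; exact: h1.
apply: (@ext_bwd z (s ++ t) n0 (@sphere_pm z n0 hz) _ ft).
  by rewrite size_cat ss st; lia.
move=> i; case: (ltnP i j) => ij.
  rewrite famK // nth_cat ss ij; apply: hyp_perp; apply: Ss; apply: mem_nth; rewrite ss //.
rewrite famB -?leqNgt // nth_cat ss ltnNge ij /=.
set w := nth 0 t (i - j).
have wL : w \in Lv.
  apply: tL; apply: mem_nth; rewrite st; have := ltn_ord i; lia.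
move=> y /(@T_BL_pm n0 z hz) Py; rewrite /hyp /= (@proj_L w y); last first.
  by rewrite /Defs.Lsp /= dotC; apply: HL wL en _; rewrite inE.
by rewrite Py dot0r.
Qed.

Lemma case2 z : (3 <= n)%N -> (1 <= j)%N -> (j <= n - 2)%N -> sphere z -> z <> en -> z <> - en ->
  (ext Ks z <-> (j <= sdim (TS K z))%N /\ ~ (TS K z `<=` Lsp)).
Proof.
move=> n3 j1 jn sz zne zne'; have n0 : (0 < n)%N by lia.
have jn1 : (j <= n.-1)%N by lia.
split.
  move=> /(@ext_fwd z n0) [a [Ha fu n2]]; split; first by apply/sdimE; exact: (@fwd_S z a jn1 Ha fu).
  move=> SL; apply: n2; exists [:: z; en]; split => //.
    move=> x; rewrite !inE => /orP [/eqP ->|/eqP ->] v /mapP [i _ ->].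
      exact: (Ha i z (T_self _ _)).
    case: (ltnP i j) => ij.
      have Sa : TS K z (a i) by apply: perp_hyp; rewrite -(@famK i ij); exact: Ha.
      exact: SL _ Sa.
    by apply: (Ha i en); rewrite famB -?leqNgt //; exact: (@en_T n0 z sz zne zne').
  rewrite free_cons seq1_free span_seq1; apply/andP; split.
    apply/negP => /vlineP [c zc]; have := @pz_neq0 n0 z sz zne zne'.
    by rewrite zc linearZ /= (proj_en n0) scaler0 eqxx.
  by rewrite -dot_eq0 (en_en n0) oner_neq0.
move=> [/sdimE [s [ss Ss fs]] nS].
have [v [Sv nLv]] : exists v, TS K z v /\ dot v en != 0.
  case: (pselect (exists v, TS K z v /\ dot v en != 0)) => // H; exfalso.
  apply: nS => x Sx; rewrite /Defs.Lsp /=.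
  have [//|ne] := eqVneq (dot x en) 0; exfalso; apply: H; by exists x.
have v0 : v != 0 by apply/negP => /eqP v0; move: nLv; rewrite v0 dot0l eqxx.
have fv : free [:: v] by rewrite seq1_free.
have [t1 [st1 t1s ft1]] : exists t, [/\ size t = j.-1, {subset t <= vspan s} & free ([:: v] ++ t)].
  apply: EXT fv _; have := dimvS (addvSr (vspan [:: v]) (vspan s)).
  rewrite (eqP fs) ss /= => h; apply: leq_trans h; rewrite addn1 prednK //.
set s1 := [:: v] ++ t1.
have S1 : forall w, w \in s1 -> TS K z w.
  move=> w; rewrite /s1 /= inE => /orP [/eqP ->|wt] //.
  by apply: (@perp_span _ s w) => [x xs|]; [exact: Ss | exact: t1s].
have [W2 [dW HW]] := RN [:: z; en].
have disj : (<[v]> :&: W2)%VS = 0%VS.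
  apply/eqP; rewrite -subv0; apply/subvP => w /memv_capP [/vlineP [c ->] wW]; rewrite memv0.
  have := HW _ wW en; rewrite !inE eqxx orbT => /(_ isT); rewrite dotZr => /eqP.
  rewrite mulf_eq0 dotC (negbTE nLv) orbF => /eqP ->; by rewrite scale0r.
have sub1 : (<[v]> + W2 <= vspan s1 + W2)%VS.
  by apply: addvS => //; rewrite /s1 span_cat span_seq1 addvSl.
have [t2 [st2 tW ft2]] : exists t, [/\ size t = (n.-1 - j)%N, {subset t <= W2} & free (s1 ++ t)].
  apply: EXT ft1 _; have := dimvS sub1; rewrite dimv_disjoint_sum // dim_vline v0.
  move: dW; rewrite /= /s1 span_cat span_seq1 st1 prednK // subnK; last exact: jn1.
  move=> h1 h2; apply: leq_trans h2; rewrite -subn1 leq_subLR; apply: (leq_trans h1).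
  by rewrite [X in (_ <= X)%N]addnA addnC.
apply: (@ext_bwd z (s1 ++ t2) n0 sz _ ft2).
  by rewrite size_cat /s1 size_cat st1 st2 /=; lia.
have ss1 : size s1 = j by rewrite /s1 size_cat st1 /=; lia.
move=> i; case: (ltnP i j) => ij.
  rewrite famK // nth_cat ss1 ij; apply: hyp_perp; apply: S1; apply: mem_nth; rewrite ss1 //.
rewrite famB -?leqNgt // nth_cat ss1 ltnNge ij /=.
set w := nth 0 t2 (i - j).
have wW : w \in W2.
  apply: tW; apply: mem_nth; rewrite st2; have := ltn_ord i; lia.
move=> y /(@T_z_sub n0 z sz zne zne') Hy; rewrite /hyp /=; apply: (@Hs_perp z w _ _ y Hy).
  by rewrite dotC; apply: (HW w wW z); rewrite inE eqxx.
by rewrite dotC; apply: (HW w wW en); rewrite !inE eqxx orbT.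
Qed.

End S.

Theorem lemma3p9 (R : realType) (n j : nat) (K : set 'rV[R]_n) :
  (3 <= n)%N -> (1 <= j)%N -> (j <= n - 2)%N -> convex_body K ->
  (forall z : 'rV[R]_n, (z = @en R n \/ z = - @en R n) ->
     (ext (famKB K j) z <-> (j <= sdim (TS K z))%N)) /\
  (forall z : 'rV[R]_n, sphere z -> z <> @en R n -> z <> - @en R n ->
     (ext (famKB K j) z <-> (j <= sdim (TS K z))%N /\ ~ (TS K z `<=` @Lsp R n))).
Proof.
move=> n3 j1 jn _; split.
  by move=> z hz; exact: case1.
by move=> z sz z1 z2; exact: case2.
Qed.
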